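(* Let $n$ and $r$ be positive integers with $\frac{14}{5}r-1\le n\le 3r-2$. Then $\rho_2(K(n,r))=3$.
   Context: For integers $n\ge 2r$, the Kneser graph $K(n,r)$ has as vertices the $r$-element subsets of $[n]=\{1,\dots,n\}$, two vertices being adjacent iff they are disjoint. A $2$-packing of a graph $G$ is a set of vertices pairwise at distance at least $3$ in $G$; $\rho_2(G)$ is the maximum cardinality of a $2$-packing. *)

(* Defs.v *)
From mathcomp Require Import all_boot all_order.
Set Implicit Arguments. Unset Strict Implicit. Unset Printing Implicit Defensive.

Definition kneser_vertex (n r : nat) : predArgType :=
  {A : {set 'I_n} | #|A| == r}.

Definition kneser_adj (n r : nat) : rel (kneser_vertex n r) :=
  fun A B => [disjoint val A & val B].

Definition dist_le (T : finType) (e : rel T) (k : nat) (x y : T) : Prop :=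
  exists p : seq T, [/\ path e x p, last x p = y & size p <= k].

Definition two_packing (T : finType) (e : rel T) (S : {set T}) : Prop :=
  forall x y, x \in S -> y \in S -> x != y -> ~ dist_le e 2 x y.

Definition rho2_eq (T : finType) (e : rel T) (m : nat) : Prop :=
  (exists S : {set T}, two_packing e S /\ #|S| = m) /\
  (forall S : {set T}, two_packing e S -> #|S| <= m).

(* Main.v *)
Require Import Defs.
From mathcomp Require Import all_boot all_order.
From mathcomp Require Import zify.

Lemma sub_card (T : finType) (A : {set T}) k :
  k <= #|A| -> exists2 B : {set T}, B \subset A & #|B| = k.
Proof.
elim: k => [|k IH] hk; first by exists set0; rewrite ?sub0set ?cards0.
have [B BA cB] := IH (ltnW hk).
have : 0 < #|A :\: B| by rewrite cardsD (setIidPr BA); lia.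
case/card_gt0P => x; rewrite in_setD => /andP [xB xA].
exists (x |: B); first by rewrite subUset sub1set xA BA.
by rewrite cardsU1 xB cB.
Qed.

Lemma card_ordP n (P : pred nat) :
  #|[set x : 'I_n | P (val x)]| = count P (iota 0 n).
Proof.
rewrite cardE /enum_mem size_filter -enumT -val_enum_ord count_map.
by apply: eq_count => x; rewrite /= inE.
Qed.

Lemma count_blk c a b m : c <= a -> a <= b ->
  count (fun x => (x < c) || (a <= x < b)) (iota 0 m) = minn m c + (minn m b - minn m a).
Proof.
move=> ca ab; elim: m => [|m IH]; first by rewrite !min0n.
have -> : iota 0 m.+1 = iota 0 m ++ [:: m] by rewrite -addn1 iotaD.
rewrite count_cat IH /= addn0.
case: (ltnP m c) => h1; case: (leqP a m) => h2; case: (ltnP m b) => h3 /=; lia.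
Qed.

Lemma count_lt c m : count (fun x => x < c) (iota 0 m) = minn m c.
Proof.
elim: m => [|m IH]; first by rewrite !min0n.
have -> : iota 0 m.+1 = iota 0 m ++ [:: m] by rewrite -addn1 iotaD.
rewrite count_cat IH /= addn0.
case: (ltnP m c) => h1 /=; lia.
Qed.

Section K.
Variables n r : nat.

Lemma notdist (x y : kneser_vertex n r) : x != y -> ~~ kneser_adj x y ->
  n < #|val x :|: val y| + r -> ~ dist_le (@kneser_adj n r) 2 x y.
Proof.
move=> xy nadj big [[|z [|w p]] [/= P L S]].
- by rewrite L eqxx in xy.
- by subst; move: P; rewrite ?andbT => P; rewrite P in nadj.
- case: p P L S => // P L S.
  simpl in L; subst w; move: P; rewrite ?andbT => /andP [xz zy].
  have zs : val z \subset ~: (val x :|: val y).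
    rewrite setCU subsetI -!disjoints_subset; apply/andP; split.
      by rewrite disjoint_sym; exact: xz.
    exact: zy.
  have := subset_leq_card zs.
  have := cardsC (val x :|: val y); rewrite card_ord.
  have := valP z; rewrite /= => /eqP ->.
  move: big; rewrite /=; lia.
Qed.

Lemma distclose (x y : kneser_vertex n r) :
  ~ dist_le (@kneser_adj n r) 2 x y -> n < #|val x :|: val y| + r.
Proof.
move=> nd; rewrite ltnNge; apply/negP => H; apply: nd.
have := cardsC (val x :|: val y); rewrite card_ord => HC.
have [B BC cB] : exists2 B : {set 'I_n}, B \subset ~: (val x :|: val y) & #|B| = r.
  by apply: sub_card; lia.
have cB' : #|B| == r by rewrite cB.
pose z : kneser_vertex n r := exist _ B cB'.
exists [:: z; y]; split => //=.
move: BC; rewrite setCU subsetI -!disjoints_subset => /andP [b1 b2].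
by rewrite /kneser_adj /= andbT disjoint_sym b1 b2.
Qed.

End K.

Lemma bonf4 (T : finType) (A1 A2 A3 A4 : {set T}) :
  #|A1| + #|A2| + #|A3| + #|A4| <= #|A1 :|: A2 :|: A3 :|: A4| +
  ( #|A1 :&: A2| + #|A1 :&: A3| + #|A1 :&: A4| + #|A2 :&: A3| + #|A2 :&: A4| + #|A3 :&: A4|).
Proof.
have h2 := cardsUI A1 A2.
have h3 := cardsUI (A1 :|: A2) A3; rewrite setIUl in h3.
have k3 := leq_of_leqif (leq_card_setU (A1 :&: A3) (A2 :&: A3)).
have h4 := cardsUI (A1 :|: A2 :|: A3) A4; rewrite !setIUl in h4.
have k4 := leq_of_leqif (leq_card_setU (A1 :&: A4 :|: A2 :&: A4) (A3 :&: A4)).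
have k4' := leq_of_leqif (leq_card_setU (A1 :&: A4) (A2 :&: A4)).
lia.
Qed.

Lemma upper n r (S : {set kneser_vertex n r}) : 14 * r <= 5 * (n + 1) ->
  two_packing (@kneser_adj n r) S -> #|S| <= 3.
Proof.
move=> hnr P; rewrite leqNgt; apply/negP => H.
have [a aS] : exists a, a \in S by apply/card_gt0P; clear -H; lia.
have := cardsD1 a S; rewrite aS => e1.
have [b bS1] : exists b, b \in S :\ a by apply/card_gt0P; clear -H e1; rewrite add1n in e1; lia.
have := cardsD1 b (S :\ a); rewrite bS1 => e2.
have [c cS2] : exists c, c \in S :\ a :\ b by apply/card_gt0P; clear -H e1 e2; rewrite add1n in e1 e2; lia.
have := cardsD1 c (S :\ a :\ b); rewrite cS2 => e3.
have [d dS3] : exists d, d \in S :\ a :\ b :\ c by apply/card_gt0P; clear -H e1 e2 e3; rewrite add1n in e1 e2 e3; lia.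
move: bS1 cS2 dS3; rewrite !in_setD1 => /andP [ba bS] /and3P [cb ca cS] /and4P [dc db da dS].
have pb : forall x y, x \in S -> y \in S -> x != y -> #|val x :&: val y| + n < 3 * r.
  move=> x y xS yS xy; have h1 := @distclose _ _ x y (P x y xS yS xy).
  have h2 := cardsUI (val x) (val y); rewrite (eqP (valP x)) (eqP (valP y)) in h2.
  move: h1 h2; move: ( #|val x :|: val y|) ( #|val x :&: val y|) => u i.
  clear; lia.
have hab := pb a b aS bS ltac:(by rewrite eq_sym).
have hac := pb a c aS cS ltac:(by rewrite eq_sym).
have had := pb a d aS dS ltac:(by rewrite eq_sym).
have hbc := pb b c bS cS ltac:(by rewrite eq_sym).
have hbd := pb b d bS dS ltac:(by rewrite eq_sym).
have hcd := pb c d cS dS ltac:(by rewrite eq_sym).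
have hb := @bonf4 _ (val a) (val b) (val c) (val d).
rewrite (eqP (valP a)) (eqP (valP b)) (eqP (valP c)) (eqP (valP d)) in hb.
have hU := max_card (val a :|: val b :|: val c :|: val d); rewrite card_ord in hU.
move: hab hac had hbc hbd hcd hb hU.
move: ( #|val a :&: val b|) ( #|val a :&: val c|) ( #|val a :&: val d|) ( #|val b :&: val c|) ( #|val b :&: val d|) ( #|val c :&: val d|) ( #|val a :|: val b :|: val c :|: val d|).
clear -hnr => *; lia.
Qed.

Definition blk n c d (i : nat) : {set 'I_n} :=
  [set x : 'I_n | (x < c) || (c + i * d <= x < c + i.+1 * d)].

Lemma card_blk n c d i : i <= 2 -> c + 3 * d <= n -> #|blk n c d i| = c + d.
Proof.
move=> hi hn.
have -> : #|blk n c d i| = count (fun x => (x < c) || (c + i * d <= x < c + i.+1 * d)) (iota 0 n).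
  by rewrite -card_ordP; apply: eq_card => x; rewrite !inE.
rewrite count_blk; [|lia|nia].
have h1 : c + i.+1 * d <= n by nia.
have h2 : c + i * d <= n by nia.
rewrite (minn_idPr h1) (minn_idPr h2).
rewrite mulSn. lia.
Qed.

Lemma blkI n c d i j : 0 < d -> i != j -> blk n c d i :&: blk n c d j \subset [set x : 'I_n | x < c].
Proof.
move=> d0 ij; apply/subsetP => x; rewrite !inE.
case/andP => /orP [->|/andP [h1 h2]] // /orP [->|/andP [h3 h4]] //.
have : i * d < j.+1 * d by lia.
have : j * d < i.+1 * d by lia.
rewrite !ltn_pmul2r //; lia.
Qed.

Lemma card_lt n c : #|[set x : 'I_n | x < c]| = minn n c.
Proof. by rewrite -count_lt -card_ordP; apply: eq_card => x; rewrite !inE. Qed.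

Theorem corollary4p9 (n r : nat) :
  0 < r -> 0 < n -> 14 * r <= 5 * (n + 1) -> n <= 3 * r - 2 ->
  rho2_eq (@kneser_adj n r) 3.
Proof.
move=> r0 n0 h1 h2.
have [c [c0 c1 c2 c3]] : exists c, [/\ 0 < c, c + n < 3 * r, 3 * r <= n + 2 * c & c < r].
  by exists ((3 * r - n) - (3 * r - n) %/ 2); split; lia.
have [d [d1 d0 d2]] : exists d, [/\ c + d = r, 0 < d & c + 3 * d <= n].
  by exists (r - c); split; lia.
have cardv : forall i : 'I_3, #|blk n c d i| == r.
  by move=> i; rewrite card_blk ?d1 //; have := ltn_ord i; lia.
pose v (i : 'I_3) : kneser_vertex n r := exist _ (blk n c d i) (cardv i).
have pair : forall i j : 'I_3, i != j ->
    v i != v j /\ ~ dist_le (@kneser_adj n r) 2 (v i) (v j).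
  move=> i j ij.
  have hI : #|blk n c d i :&: blk n c d j| <= c.
    have := subset_leq_card (blkI n c d i j d0 ij); rewrite card_lt; lia.
  have hU := cardsUI (blk n c d i) (blk n c d j).
  rewrite (eqP (cardv i)) (eqP (cardv j)) in hU.
  have vij : v i != v j.
    apply/eqP => e.
    have e' : blk n c d i = blk n c d j by move: (congr1 val e).
    by move: hI; rewrite -e' setIid (eqP (cardv i)); lia.
  have hbig : n < #|blk n c d i :|: blk n c d j| + r by lia.
  split=> //; apply: (@notdist _ _ _ _ vij _ hbig).
  rewrite /kneser_adj /= -setI_eq0; apply/set0Pn; exists (Ordinal n0).
  by rewrite !inE /= c0.
split.
- exists [set v i | i in 'I_3]; split.
  + move=> x y /imsetP [i _ ->] /imsetP [j _ ->] xy.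
    apply: (proj2 (pair i j _)); apply: contraNneq xy => ->; done.
  + rewrite card_imset ?card_ord //.
    move=> i j e; case: (eqVneq i j) => // ij.
    by have [h _] := pair i j ij; rewrite e eqxx in h.
- by move=> S; apply: upper.
Qed.
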